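(* Let $X$ and $Y$ be completely regular Hausdorff spaces and $c: X\times Y\to\mathbb{R}$ a bounded function with property (H). Let $R: C_b(X)\times C_b(Y)\to\mathbb{R}\cup\{-\infty\}$ be a proper function (not identically $-\infty$) such that: (i) $R$ is $\oplus$-nondecreasing; (ii) for every $C\in\mathcal{E}(X)$ and $D\in\mathcal{E}(Y)$, the restriction of $R$ to $C\times D$ is upper semicontinuous for the product of the topologies $\mathcal{T}_p$ (pointwise convergence) on $C$ and on $D$. Then the problem $$v_{\max}(\mathbf{GDP}):=\sup\{R(\xi,\zeta):\ \xi\in C_b(X),\ \zeta\in C_b(Y),\ \xi\oplus\zeta\le c\}$$ has a solution of the form $(\xi_0^{c\bar c},\xi_0^c)\in C_b(X)\times C_b(Y)$ for some $\xi_0\in C_b(X)$; i.e. $\xi_0^{c\bar c}\oplus\xi_0^c\le c$ and $R(\xi_0^{c\bar c},\xi_0^c)=v_{\max}(\mathbf{GDP})$.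
   Context: $C_b(Z)$: real-valued bounded continuous functions on $Z$; $\mathcal{T}_p$: topology of pointwise convergence; $\mathcal{E}(Z)$: family of uniformly bounded equicontinuous subsets of $C_b(Z)$. $(\phi\oplus\psi)(x,y):=\phi(x)+\psi(y)$, and $\phi\oplus\psi\le\phi'\oplus\psi'$ means pointwise inequality on $X\times Y$. $R$ is $\oplus$-nondecreasing if $\phi\oplus\psi\le\phi'\oplus\psi'$ implies $R(\phi,\psi)\le R(\phi',\psi')$. For $\xi: X\to\mathbb{R}$, $\xi^c(y):=\inf_{x\in X}\{c(x,y)-\xi(x)\}$; for $\zeta:Y\to\mathbb{R}$, $\zeta^{\bar c}(x):=\inf_{y\in Y}\{c(x,y)-\zeta(y)\}$; $\xi^{c\bar c}:=(\xi^c)^{\bar c}$. With $\overline{d}_c(x,x'):=\sup_{y}|c(x,y)-c(x',y)|$ and $\underline{d}_c(y,y'):=\sup_{x}|c(x,y)-c(x,y')|$, $c$ has property (H) if $\lim_{x\to x_0}\overline{d}_c(x,x_0)=0$ for every $x_0\in X$ and $\lim_{y\to y_0}\underline{d}_c(y,y_0)=0$ for every $y_0\in Y$. *)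

(* Defs.v *)
From HB Require Import structures.
From mathcomp Require Import all_boot all_order all_algebra.
From mathcomp Require Import all_classical all_reals all_analysis.
Set Implicit Arguments. Unset Strict Implicit. Unset Printing Implicit Defensive.
Import Order.TTheory GRing.Theory Num.Theory numFieldNormedType.Exports.
Local Open Scope classical_set_scope.
Local Open Scope ring_scope.

Section Defs.
Context {R : realType}.

Definition bounded_fun {Z : Type} (f : Z -> R) := exists M : R, forall z, `|f z| <= M.

Definition Cb {Z : topologicalType} (f : Z -> R) := continuous f /\ bounded_fun f.

Definition unif_bounded {Z : Type} (W : set (Z -> R)) :=
  exists M : R, forall f, W f -> forall z, `|f z| <= M.

(* E(Z): uniformly bounded equicontinuous subsets of C_b(Z) *)
Definition EqBd {Z : topologicalType} (W : set (Z -> R)) :=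
  (forall f, W f -> Cb f) /\ unif_bounded W /\ @equicontinuous Z R _ W id.

Definition oplus_le {X Y : Type} (phi : X -> R) (psi : Y -> R) (phi' : X -> R) (psi' : Y -> R) :=
  forall x y, phi x + psi y <= phi' x + psi' y.

Definition oplus_le_c {X Y : Type} (xi : X -> R) (zeta : Y -> R) (c : X -> Y -> R) :=
  forall x y, xi x + zeta y <= c x y.

Definition ctrans {X Y : Type} (c : X -> Y -> R) (xi : X -> R) : Y -> R :=
  fun y => inf [set c x y - xi x | x in [set: X]].
Definition cbtrans {X Y : Type} (c : X -> Y -> R) (zeta : Y -> R) : X -> R :=
  fun x => inf [set c x y - zeta y | y in [set: Y]].

Definition dbar_c {X Y : Type} (c : X -> Y -> R) (x x' : X) : R :=
  sup [set `|c x y - c x' y| | y in [set: Y]].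
Definition dund_c {X Y : Type} (c : X -> Y -> R) (y y' : Y) : R :=
  sup [set `|c x y - c x y'| | x in [set: X]].

Definition propH {X Y : topologicalType} (c : X -> Y -> R) :=
  (forall x0 : X, dbar_c c x x0 @[x --> x0] --> (0 : R)) /\
  (forall y0 : Y, dund_c c y y0 @[y --> y0] --> (0 : R)).

Definition usc_on {T : topologicalType} (A : set T) (f : T -> \bar R) :=
  forall x, A x -> forall a : R, (f x < a%:E)%E ->
    exists2 V, nbhs x V & forall y, A y -> V y -> (f y < a%:E)%E.

Definition vmax {X Y : topologicalType} (c : X -> Y -> R)
    (Rf : (X -> R) -> (Y -> R) -> \bar R) : \bar R :=
  ereal_sup [set r | exists xi zeta, [/\ Cb xi, Cb zeta, oplus_le_c xi zeta c &
                                         r = Rf xi zeta]].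
End Defs.

(* Main.v *)
Require Import Defs.
From HB Require Import structures.
From mathcomp Require Import all_boot all_order all_algebra.
From mathcomp Require Import all_classical all_reals all_analysis.
Import Order.TTheory GRing.Theory Num.Theory numFieldNormedType.Exports.
Local Open Scope classical_set_scope.
Local Open Scope ring_scope.

From mathcomp Require Import ring lra.


Section Aux.
Context {R : realType}.

Lemma inf_le_img {T : Type} (h : T -> R) m t :
  (forall t, m <= h t) -> inf [set h t | t in [set: T]] <= h t.
Proof.
move=> hm; apply: ge_inf; last by exists t.
by exists m => _ [s _ <-].
Qed.

Lemma le_inf_img {T : Type} (h : T -> R) m :
  inhabited T -> (forall t, m <= h t) -> m <= inf [set h t | t in [set: T]].
Proof.
move=> [t0] hm; apply: lb_le_inf; first by exists (h t0), t0.
by move=> _ [s _ <-].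
Qed.

Lemma le_sup_img {T : Type} (h : T -> R) m t :
  (forall t, h t <= m) -> h t <= sup [set h t | t in [set: T]].
Proof.
move=> hm; apply: ub_le_sup; last by exists t.
by exists m => _ [s _ <-].
Qed.

Lemma sup_le_img {T : Type} (h : T -> R) m :
  inhabited T -> (forall t, h t <= m) -> sup [set h t | t in [set: T]] <= m.
Proof.
move=> [t0] hm; apply: ge_sup; first by exists (h t0), t0.
by move=> _ [s _ <-].
Qed.

End Aux.

Section Trans.
Context {R : realType} {X Y : Type} (c : X -> Y -> R) (M : R)
  (hM : forall x y, `|c x y| <= M).

Lemma normc x y : - M <= c x y <= M.
Proof. by rewrite -ler_norml. Qed.

Lemma ctrans_le (xi : X -> R) : Defs.bounded_fun xi ->
  forall x y, ctrans c xi y <= c x y - xi x.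
Proof.
move=> [B hB] x y; apply: (@inf_le_img _ _ _ (- M - B)) => t.
move: (normc t y) (hB t); rewrite ler_norml => /andP[? ?] /andP[? ?]; lra.
Qed.

Lemma dund_ge x y y' : `|c x y - c x y'| <= dund_c c y y'.
Proof.
apply: (@le_sup_img _ _ (fun x => `|c x y - c x y'|) (M + M)) => t.
apply: (le_trans (ler_normB _ _)); exact: lerD.
Qed.

Lemma dund_le y y' : inhabited X -> dund_c c y y' <= M + M.
Proof.
move=> hX; apply: (@sup_le_img _ _ (fun x => `|c x y - c x y'|) (M + M)) => // t.
apply: (le_trans (ler_normB _ _)); exact: lerD.
Qed.

Lemma ctrans_lip (xi : X -> R) : inhabited X -> Defs.bounded_fun xi ->
  forall y y', `|ctrans c xi y - ctrans c xi y'| <= dund_c c y y'.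
Proof.
move=> hX hb y y'; rewrite ler_norml; apply/andP; split.
  suff : ctrans c xi y' - dund_c c y y' <= ctrans c xi y by lra.
  apply: le_inf_img => // x.
  have := ctrans_le xi hb x y'; have := dund_ge x y y'; rewrite ler_norml.
  move=> /andP[? ?] ?; lra.
suff : ctrans c xi y - dund_c c y y' <= ctrans c xi y' by lra.
apply: le_inf_img => // x.
have := ctrans_le xi hb x y; have := dund_ge x y y'; rewrite ler_norml.
move=> /andP[? ?] ?; lra.
Qed.

Lemma ctrans_bounded (xi : X -> R) : inhabited X -> Defs.bounded_fun xi ->
  Defs.bounded_fun (ctrans c xi).
Proof.
move=> [x0] hb; have [B hB] := hb; exists (M + B) => y; rewrite ler_norml.
apply/andP; split.
  apply: le_inf_img; first by exists.
  move=> t; move: (normc t y) (hB t); rewrite ler_norml => /andP[? ?] /andP[? ?]; lra.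
have := ctrans_le xi hb x0 y; move: (normc x0 y) (hB x0); rewrite ler_norml.
move=> /andP[? ?] /andP[? ?]; lra.
Qed.

End Trans.

Lemma cbtrans_flip {R : realType} {X Y : Type} (c : X -> Y -> R) zeta :
  cbtrans c zeta = ctrans (fun y x => c x y) zeta.
Proof. by []. Qed.

Lemma dbar_flip {R : realType} {X Y : Type} (c : X -> Y -> R) x x' :
  dbar_c c x x' = dund_c (fun y x => c x y) x x'.
Proof. by []. Qed.

Section Topo.
Context {R : realType} {Z : topologicalType} (d : Z -> Z -> R)
  (hd : forall z0, d z z0 @[z --> z0] --> (0 : R)).

Lemma lip_equicont (W : set (Z -> R)) :
  (forall f, W f -> forall z z0, `|f z - f z0| <= d z z0) ->
  @equicontinuous Z R _ W id.
Proof.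
move=> hW z0 E; rewrite -entourage_ballE => -[e /= e0 sE].
have := hd z0; move/cvgrPdist_lt => /(_ e e0); apply: filterS => z.
rewrite sub0r normrN => dz f Wf; apply: sE => /=.
rewrite /ball /= distrC; apply: le_lt_trans dz.
exact: le_trans (hW f Wf z z0) (ler_norm _).
Qed.

Lemma lip_continuous (f : Z -> R) :
  (forall z z0, `|f z - f z0| <= d z z0) -> continuous f.
Proof.
move=> hf; apply: (equicontinuous_continuous (W:=[set f]) (fW:=id) (i:=f)) => //.
by apply: lip_equicont => g ->.
Qed.
End Topo.

Section Cpt.
Context {R : realType}.

Lemma ptws_box_compact {X : topologicalType} (B : R) :
  compact [set f : {ptws X -> R} | forall x, `|f x| <= B].
Proof.
have -> : [set f : {ptws X -> R} | forall x, `|f x| <= B] =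
    [set f : {ptws X -> R} | forall x, `[- B, B]%classic (f x)].
  by apply/funext => f; apply/propext; split => h x; have := h x;
    rewrite /= in_itv /= ler_norml.
exact: (@tychonoff X (fun _ => R) (fun _ => `[- B, B]%classic) (fun _ => @segment_compact R _ _)).
Qed.

Lemma closure_le {T : topologicalType} (A : set T) (phi : T -> R) k :
  continuous phi -> (forall q, A q -> phi q <= k) ->
  forall p, closure A p -> phi p <= k.
Proof.
move=> cphi hA p Ap.
have cl : closed (phi @^-1` [set x | x <= k]).
  by apply: preimage_closed; [move=> ? _; exact: cphi | exact: closed_le].
apply: cl => Bs nB; have [q [Aq Bq]] := Ap Bs nB.
by exists q; split => //; exact: hA.
Qed.

Lemma cont_ev1 {X Y : topologicalType} (x : X) :
  continuous (fun p : ({ptws X -> R} * {ptws Y -> R})%type => p.1 x).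
Proof.
move=> p; apply: (@continuous_comp _ _ _ fst (fun f : {ptws X -> R} => f x)).
  exact: cvg_fst.
exact: (@proj_continuous X (fun _ => R) x).
Qed.

Lemma cont_ev2 {X Y : topologicalType} (y : Y) :
  continuous (fun p : ({ptws X -> R} * {ptws Y -> R})%type => p.2 y).
Proof.
move=> p; apply: (@continuous_comp _ _ _ snd (fun f : {ptws Y -> R} => f y)).
  exact: cvg_snd.
exact: (@proj_continuous Y (fun _ => R) y).
Qed.
End Cpt.

Section ContOps.
Context {R : realType} {T : topologicalType}.
Lemma contB' (f g : T -> R) : continuous f -> continuous g ->
  continuous (fun t => f t - g t).
Proof. move=> cf cg t; exact: (@continuousB R R^o T f g t (cf t) (cg t)). Qed.
Lemma contD' (f g : T -> R) : continuous f -> continuous g ->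
  continuous (fun t => f t + g t).
Proof. move=> cf cg t; exact: (@continuousD R R^o T f g t (cf t) (cg t)). Qed.
Lemma contN' (f : T -> R) : continuous f -> continuous (fun t => `|f t|).
Proof.
move=> cf t; apply: (continuous_comp (f := f) (g := Num.norm)); first exact: cf.
exact: norm_continuous.
Qed.
End ContOps.

Lemma dominate {R : realType} {X Y : Type} (c : X -> Y -> R) (M : R)
  (hM : forall x y, `|c x y| <= M) (hX : inhabited X) (hY : inhabited Y)
  (xi : X -> R) (zeta : Y -> R) (a : R) (g : Y -> R) :
  Defs.bounded_fun xi -> (forall x y, xi x + zeta y <= c x y) ->
  (forall y, g y = ctrans c xi y - a) ->
  [/\ forall x y, xi x + zeta y <= cbtrans c g x + g y,
     forall x y, cbtrans c g x + g y <= c x y,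
     forall y y', `|g y - g y'| <= dund_c c y y' &
     forall x x', `|cbtrans c g x - cbtrans c g x'| <= dbar_c c x x'].
Proof.
move=> hxi adm hg.
have hM' : forall y x, `|(fun y x => c x y) y x| <= M by move=> y x; exact: hM.
have gb : Defs.bounded_fun g.
  have [Bg hBg] := ctrans_bounded _ _ hM xi hX hxi.
  exists (Bg + `|a|) => y; rewrite hg; apply: le_trans (ler_normB _ _) _.
  exact: lerD.
split.
- move=> x y.
  have h1 : zeta y <= ctrans c xi y.
    apply: le_inf_img => // x'; have := adm x' y; lra.
  have h2 : xi x + a <= cbtrans c g x.
    apply: le_inf_img => // y'; rewrite hg.
    have := ctrans_le _ _ hM xi hxi x y'; lra.
  rewrite hg; lra.
- move=> x y; have := ctrans_le (fun y x => c x y) _ hM' g gb y x.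
  rewrite -cbtrans_flip; lra.
- move=> y y'; rewrite !hg.
  have -> : ctrans c xi y - a - (ctrans c xi y' - a) =
            ctrans c xi y - ctrans c xi y' by ring.
  exact: (ctrans_lip _ _ hM xi hX hxi).
- move=> x x'; exact: (ctrans_lip (fun y x => c x y) _ hM' g hY gb x x').
Qed.

Theorem mainTheorem3 (R : realType) (X Y : topologicalType)
  (hX : hausdorff_space X) (hY : hausdorff_space Y)
  (crX : completely_regular_space X) (crY : completely_regular_space Y)
  (neX : inhabited X) (neY : inhabited Y)
  (c : X -> Y -> R)
  (cbd : exists M : R, forall x y, `|c x y| <= M)
  (cH : propH c)
  (Rf : (X -> R) -> (Y -> R) -> \bar R)
  (Rval : forall phi psi, Cb phi -> Cb psi -> Rf phi psi != +oo%E)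
  (Rproper : exists phi psi, [/\ Cb phi, Cb psi & Rf phi psi != -oo%E])
  (Rmono : forall phi psi phi' psi', Cb phi -> Cb psi -> Cb phi' -> Cb psi' ->
     oplus_le phi psi phi' psi' -> (Rf phi psi <= Rf phi' psi')%E)
  (Rusc : forall (C : set (X -> R)) (D : set (Y -> R)), EqBd C -> EqBd D ->
     @usc_on R ({ptws X -> R} * {ptws Y -> R})%type (C `*` D)
       (fun p => Rf p.1 p.2)) :
  exists xi0 : X -> R,
    [/\ Cb xi0, Cb (cbtrans c (ctrans c xi0)), Cb (ctrans c xi0),
        oplus_le_c (cbtrans c (ctrans c xi0)) (ctrans c xi0) c &
        Rf (cbtrans c (ctrans c xi0)) (ctrans c xi0) = vmax c Rf].
Proof.
have [M hM] := cbd.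
have [x0] := neX; have [y0] := neY.
have M0 : 0 <= M by apply: le_trans (hM x0 y0).
pose B := M + M + M.
pose PX (f : X -> R) := (forall x, `|f x| <= B) /\
  (forall x x', `|f x - f x'| <= dbar_c c x x').
pose PY (g : Y -> R) := (forall y, `|g y| <= B) /\
  (forall y y', `|g y - g y'| <= dund_c c y y').
pose S := [set p : ({ptws X -> R} * {ptws Y -> R})%type |
  [/\ PX p.1, PY p.2 & forall x y, p.1 x + p.2 y <= c x y]].
have [cH1 cH2] := cH.
have PXC f : PX f -> Cb f.
  by move=> [hb hl]; split; [exact: (lip_continuous _ cH1 f hl) | exists B].
have PYC g : PY g -> Cb g.
  by move=> [hb hl]; split; [exact: (lip_continuous _ cH2 g hl) | exists B].
have EX : EqBd PX.
  split; first exact: PXC.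
  split; first by exists B => f [].
  by apply: (lip_equicont _ cH1) => f [].
have EY : EqBd PY.
  split; first exact: PYC.
  split; first by exists B => f [].
  by apply: (lip_equicont _ cH2) => f [].
have hM' : forall y x, `|(fun y x => c x y) y x| <= M by move=> y x; exact: hM.
have SC p : S p -> Cb p.1 /\ Cb p.2.
  by move=> [h1 h2 _]; split; [exact: PXC | exact: PYC].
have dom xi zeta : Cb xi -> Cb zeta -> oplus_le_c xi zeta c ->
    exists p, S p /\ oplus_le xi zeta p.1 p.2.
  move=> [_ hxi] _ adm.
  pose g := fun y => ctrans c xi y - ctrans c xi y0.
  have [d1 d2 d3 d4] := dominate _ _ hM neX neY xi zeta (ctrans c xi y0) g hxi adm (fun y => erefl (g y)).
  exists ((cbtrans c g : {ptws X -> R}), (g : {ptws Y -> R})); split => //.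
  have hg y : `|g y| <= M + M.
    apply: le_trans (dund_le _ _ hM y y0 neX).
    exact: (ctrans_lip _ _ hM xi neX hxi).
  split => //=.
  - split => // x; rewrite ler_norml; apply/andP; split.
      apply: le_inf_img => // y; have := hg y; have := normc _ _ hM x y.
      rewrite ler_norml => /andP[? ?] /andP[? ?]; rewrite /B; lra.
    have := d2 x y0; have := normc _ _ hM x y0.
    rewrite /g subrr => /andP[? ?]; rewrite /B; lra.
  - split => // y; apply: le_trans (hg y) _; rewrite /B; lra.
have cptS : compact S.
  apply: (subclosed_compact _ (compact_setX (ptws_box_compact (X:=X) B)
                                            (ptws_box_compact (X:=Y) B))); last first.
    by move=> p [[h1 _] [h2 _] _]; split.
  have cnorm (phi : ({ptws X -> R} * {ptws Y -> R})%type -> R) :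
      continuous phi -> continuous (fun q => `|phi q|).
    move=> cphi q; apply: (continuous_comp (f := phi) (g := Num.norm)).
      exact: cphi.
    exact: norm_continuous.
  move=> p clp; split; [split|split|].
  - move=> x; have := closure_le S (fun q => `|q.1 x|) B _ _ p clp.
    apply; last by move=> q [[]].
    apply: cnorm; exact: cont_ev1.
  - move=> x x'; have := closure_le S (fun q => `|q.1 x - q.1 x'|) (dbar_c c x x') _ _ p clp.
    apply; last by move=> q [[]].
    apply: contN'; apply: contB'; exact: cont_ev1.
  - move=> y; have := closure_le S (fun q => `|q.2 y|) B _ _ p clp.
    apply; last by move=> q [_ []].
    apply: contN'; exact: cont_ev2.
  - move=> y y'; have := closure_le S (fun q => `|q.2 y - q.2 y'|) (dund_c c y y') _ _ p clp.
    apply; last by move=> q [_ []].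
    apply: contN'; apply: contB'; exact: cont_ev2.
  - move=> x y; have := closure_le S (fun q => q.1 x + q.2 y) (c x y) _ _ p clp.
    apply; last by move=> q [].
    apply: contD'; [exact: cont_ev1 | exact: cont_ev2].
pose v := vmax c Rf.
pose I := [set a : R | (a%:E < v)%E].
pose Bs := fun a : R => S `&` [set q | (a%:E < Rf q.1 q.2)%E].
have vub xi zeta : Cb xi -> Cb zeta -> oplus_le_c xi zeta c -> (Rf xi zeta <= v)%E.
  by move=> h1 h2 h3; apply: ereal_sup_ubound; exists xi, zeta.
have Bne a : I a -> Bs a !=set0.
  move=> /ereal_sup_gt [_ [xi [zeta [hxi hzeta hadm ->]]]] altR.
  have [p [Sp hle]] := dom xi zeta hxi hzeta hadm.
  have [C1 C2] := SC p Sp.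
  exists p; split => //; apply: (lt_le_trans altR); exact: Rmono.
have good xi0 : Cb xi0 -> [/\ Cb (cbtrans c (ctrans c xi0)), Cb (ctrans c xi0) &
    oplus_le_c (cbtrans c (ctrans c xi0)) (ctrans c xi0) c].
  move=> [_ hb].
  have hcb := ctrans_bounded _ _ hM xi0 neX hb.
  split.
  - split; first exact: (lip_continuous _ cH1 _ (ctrans_lip _ _ hM' _ neY hcb)).
    exact: (ctrans_bounded _ _ hM' _ neY hcb).
  - split; first exact: (lip_continuous _ cH2 _ (ctrans_lip _ _ hM _ neX hb)).
    exact: hcb.
  - move=> x y; have := ctrans_le _ _ hM' _ hcb y x; rewrite -cbtrans_flip; lra.
have [vNy|vnNy] := eqVneq v -oo%E.
  have C0 : Cb (fun _ : X => 0 : R).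
    by split; [exact: cst_continuous | exists 0 => _; rewrite normr0].
  have [g1 g2 g3] := good _ C0.
  exists (fun _ => 0); split => //.
  rewrite -/v vNy; apply/eqP; rewrite -leeNy_eq -vNy; exact: vub.
have Ine : exists a, I a.
  move: vnNy; rewrite /I; case: (v) => [r| |] // _.
    by exists (r - 1); rewrite /= lte_fin ltrBlDr ltrDl.
  by exists 0; rewrite /= ltry.
have Fil : ProperFilter (filter_from I Bs).
  apply: filter_from_proper; last exact: Bne.
  apply: filter_from_filter => // i j Ii Ij.
  have [hij|hji] := leP i j.
    exists j => // q [Sq hq]; split; split => //.
    by apply: le_lt_trans hq; rewrite lee_fin.
  exists i => // q [Sq hq]; split; split => //.
  by apply: le_lt_trans hq; rewrite lee_fin ltW.
have FS : filter_from I Bs S.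
  by have [a Ia] := Ine; exists a => // q [].
have [p [Sp clp]] := cptS _ Fil FS.
have [Cp1 Cp2] := SC p Sp.
have vle : (v <= Rf p.1 p.2)%E.
  rewrite leNgt; apply/negP => hlt.
  have [a [ha1 ha2]] : exists a, (Rf p.1 p.2 < a%:E)%E /\ I a.
    have Rnp := Rval _ _ Cp1 Cp2.
    move: hlt Rnp Ine; rewrite /I; case: (Rf p.1 p.2) => [r| |] //; last first.
      by move=> _ _ [a Ia]; exists a; split => //; exact: ltNyr.
    move: vnNy; case: (v) => [s| |] // _ hrs _ _.
      rewrite lte_fin in hrs; have [h1 h2] := midf_lt hrs.
      by exists ((r + s) / 2); rewrite /= !lte_fin.
    by exists (r + 1); rewrite /= lte_fin ltrDl ltry.
  have CDp : (PX `*` PY) p by case: Sp.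
  have [V nV hV] := Rusc PX PY EX EY p CDp a ha1.
  have [q [[Sq hq] Vq]] := clp (Bs a) V (ex_intro2 _ _ a ha2 (fun _ h => h)) nV.
  have CDq : (PX `*` PY) q by case: Sq.
  by have := hV q CDq Vq; rewrite ltNge (ltW hq).
have [g1 g2 g3] := good p.1 Cp1.
exists p.1; split => //.
apply: le_anti; rewrite vub //=.
apply: (le_trans vle); apply: Rmono => //.
have [_ hb] := Cp1.
have [_ _ padm] := Sp.
have [d1 _ _ _] := dominate _ _ hM neX neY p.1 p.2 0 (ctrans c p.1) hb padm
  (fun y => esym (subr0 _)).
exact: d1.
Qed.
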